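(* Let $T=(V,E)$ be a finite undirected tree, let $\mathcal{O}$ be a nonempty proper subset of $V$ (the observers), and consider the infection model described in the context, with unknown source $s\in V$. Then, with probability one, $s$ does not belong to any non-feasible equivalence class $r\in[\mathcal{O}]$.
   Context: Infection model: an infection starts at time $0$ at a single node $s\in V$ (the source). For each edge $e\in E$ there is a nonnegative random delay $\tau_e$ with a continuous (atomless) distribution, and the $\tau_e$, $e\in E$, are independent. For $u,v\in V$, $[u,v]$ denotes the set of edges (or vertices, depending on context) of the unique path in $T$ between $u$ and $v$. The infection time of $v\in V$ is $\tau_v:=\sum_{e\in[s,v]}\tau_e$. Only the $\tau_o$, $o\in\mathcal{O}$, are observed. Equivalence classes: for $u,v\in V\setminus\mathcal{O}$, $u\equiv v$ iff $[u,v]\cap\mathcal{O}=\emptyset$ (vertex sets). $[\mathcal{O}]$ is the set of equivalence classes. For $r\in[\mathcal{O}]$, its boundary $\partial r$ is the set of observers adjacent to some node of $r$. For $o\in\mathcal{O}$ and a class $r$, $V_{o;r}:=\{v\in V: [o,v]\cap r=\emptyset\}$ (vertex sets), and $T_{o;r}$ is the subtree of $T$ induced on $V_{o;r}$, rooted at $o$. A class $r\in[\mathcal{O}]$ is feasible (for a given realization of the observed times) if for every $o\in\partial r$ and every $o_1,o_2\in V_{o;r}\cap\mathcal{O}$ with $o_1$ an ancestor of $o_2$ in $T_{o;r}$, one has $\tau_{o_1}\le\tau_{o_2}$. *)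

(* Defs.v *)
From HB Require Import structures.
From mathcomp Require Import all_boot all_order all_algebra.
From mathcomp Require Import all_classical all_reals all_analysis.
Set Implicit Arguments. Unset Strict Implicit. Unset Printing Implicit Defensive.
Import Order.TTheory GRing.Theory Num.Theory.
Local Open Scope ring_scope.

Section Graph.
Variables (V : finType) (adj : rel V).

Definition simple_graph := symmetric adj /\ irreflexive adj.

Definition upath (u v : V) (p : seq V) : Prop :=
  [/\ path adj u p, last u p = v & uniq (u :: p)].

Definition upath_in (W : {set V}) (u v : V) (p : seq V) : Prop :=
  upath u v p /\ all (fun x => x \in W) (u :: p).

Definition is_tree : Prop :=
  simple_graph /\ forall u v : V, exists! p, upath u v p.

Definition edgeb (A : {set V}) : bool :=
  [exists u, exists v, adj u v && (A == [set u; v])].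
Definition edge := {A : {set V} | edgeb A}.

Definition pathV (u v : V) : {set V} :=
  [set w | `[< exists p, upath u v p /\ w \in u :: p >]].

Definition onpathE (u v : V) (A : {set V}) : Prop :=
  exists p, upath u v p /\
    exists i, (i < size p)%N /\ A = [set nth u (u :: p) i; nth u (u :: p) i.+1].

Definition obs_equiv (O : {set V}) (u v : V) : bool :=
  [&& u \notin O, v \notin O & [disjoint pathV u v & O]].

Definition is_class (O : {set V}) (r : {set V}) : Prop :=
  exists2 u, u \notin O & r = [set v | obs_equiv O u v].

Definition boundary (O r : {set V}) : {set V} :=
  [set o in O | [exists x in r, adj o x]].

Definition Vor (o : V) (r : {set V}) : {set V} :=
  [set v | [disjoint pathV o v & r]].

Definition ancestor_in (W : {set V}) (o o1 o2 : V) : Prop :=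
  exists p, upath_in W o o2 p /\ o1 \in o :: p.

End Graph.

Section Infection.
Variables (V : finType) (adj : rel V) (R : realType) (Omega : Type).
Variable (tau : edge adj -> Omega -> R).

Definition inf_time (s v : V) (w : Omega) : R :=
  \sum_(A : edge adj | `[< onpathE adj s v (val A) >]) tau A w.

Definition feasible (O : {set V}) (s : V) (r : {set V}) (w : Omega) : Prop :=
  forall o, o \in boundary adj O r ->
  forall o1 o2, o1 \in Vor adj o r :&: O -> o2 \in Vor adj o r :&: O ->
    ancestor_in adj (Vor adj o r) o o1 o2 ->
    inf_time s o1 w <= inf_time s o2 w.
End Infection.

Section Prob.
Local Open Scope classical_set_scope.
Local Open Scope ereal_scope.
Definition mutually_independent (d : measure_display) (Omega : measurableType d)
  (R : realType) (P : probability Omega R) (I : finType) (X : I -> Omega -> R) : Prop :=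
  forall (J : {set I}) (B : I -> set R), (forall i, measurable (B i)) ->
    P (\bigcap_(i in [set i | i \in J]) (X i @^-1` B i)) =
    \prod_(i in J) P (X i @^-1` B i).
End Prob.

(* Main.v *)
Require Import Defs.
From HB Require Import structures.
From mathcomp Require Import all_boot all_order all_algebra.
From mathcomp Require Import all_classical all_reals all_analysis.
Import Order.TTheory GRing.Theory Num.Theory.
Local Open Scope classical_set_scope.
Local Open Scope ring_scope.
Set Implicit Arguments. Unset Strict Implicit.

Lemma upath_uniq {V : finType} {adj : rel V} (T : is_tree adj) a b p1 p2 :
  upath adj a b p1 -> upath adj a b p2 -> p1 = p2.
Proof. case: T => _ /(_ a b) [p [_ H]] H1 H2. by rewrite -(H _ H1) -(H _ H2). Qed.

Lemma inPV {V : finType} {adj : rel V} a b p w :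
  upath adj a b p -> w \in a :: p -> w \in pathV adj a b.
Proof. move=> H1 H2; rewrite inE; apply/asboolP; by exists p. Qed.

Lemma PVP {V : finType} {adj : rel V} (T : is_tree adj) a b w :
  w \in pathV adj a b -> forall p, upath adj a b p -> w \in a :: p.
Proof.
rewrite inE => /asboolP [p' [H1 H2]] p H. by rewrite -(upath_uniq T H1 H).
Qed.

Lemma ex_upath {V : finType} {adj : rel V} (T : is_tree adj) a b :
  exists p, upath adj a b p.
Proof. case: T => _ /(_ a b) [p [H _]]; by exists p. Qed.

Lemma walkPV {V : finType} {adj : rel V} (T : is_tree adj) a p w :
  path adj a p -> w \in pathV adj a (last a p) -> w \in a :: p.
Proof.
move=> Hp; case: (shortenP Hp) => p' Hp' Hu Hsub Hw.
have := PVP T Hw (p := p') (And3 Hp' erefl Hu).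
rewrite !inE; case/orP => [->//|/Hsub ->]; by rewrite orbT.
Qed.

Lemma PVsym {V : finType} {adj : rel V} (T : is_tree adj) a b w :
  w \in pathV adj a b -> w \in pathV adj b a.
Proof.
move=> Hw; have [p Hp] := ex_upath T a b.
have Hin := PVP T Hw Hp.
case: Hp => Hpath Hl Hu.
have E : b :: rev (belast a p) = rev (a :: p) by rewrite [a :: p]lastI rev_rcons Hl.
apply: (@inPV _ _ b a (rev (belast a p))); last by rewrite E mem_rev.
split.
- rewrite -Hl rev_path; apply: sub_path Hpath => y z /=.
  by case: T => [[Hs _] _]; rewrite Hs.
- have : last b (b :: rev (belast a p)) = a by rewrite E rev_cons last_rcons.
  by [].
- by rewrite E rev_uniq.
Qed.

Lemma PVtri {V : finType} {adj : rel V} (T : is_tree adj) a b c w :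
  w \in pathV adj a c -> w \in pathV adj a b \/ w \in pathV adj b c.
Proof.
move=> Hw; have [p1 [P1 L1 U1]] := ex_upath T a b.
have [p2 [P2 L2 U2]] := ex_upath T b c.
have Hp : path adj a (p1 ++ p2) by rewrite cat_path P1 L1 P2.
have Hl : last a (p1 ++ p2) = c by rewrite last_cat L1 L2.
have := walkPV T Hp (w:=w); rewrite Hl => /(_ Hw).
rewrite inE mem_cat orbA -(in_cons a p1) => /orP [H|H].
- left; exact: (inPV (And3 P1 L1 U1)).
- right; have HU : upath adj b c p2 by split.
  by apply: (inPV HU); rewrite inE H orbT.
Qed.

Lemma PVpre {V : finType} {adj : rel V} (T : is_tree adj) a b w z :
  w \in pathV adj a b -> z \in pathV adj a w -> z \in pathV adj a b.
Proof.
move=> Hw Hz; have [p Hp] := ex_upath T a b.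
have Hwin := PVP T Hw Hp.
move: Hp; case/splitPl: Hwin => p1 p2 Hl Hp.
have Hp1 : path adj a p1 by case: Hp; rewrite cat_path => /andP [].
move: Hz; rewrite -Hl => /(walkPV T Hp1) Hz.
apply: (inPV Hp); rewrite -cat_cons mem_cat Hz //.
Qed.

Lemma PVlast {V : finType} {adj : rel V} (T : is_tree adj) a b :
  b \in pathV adj a b.
Proof.
have [p Hp] := ex_upath T a b; apply: (inPV Hp).
case: Hp => _ <- _; exact: mem_last.
Qed.

Lemma onpath_mono {V : finType} {adj : rel V} (T : is_tree adj) s o1 o2 P A :
  upath adj s o2 P -> o1 \in s :: P -> onpathE adj s o1 A -> onpathE adj s o2 A.
Proof.
move=> HP Hin; move: HP; case/splitPl: Hin => P1 P2 Hl [Hp Hl2 Hu].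
have HP1 : upath adj s o1 P1.
  split => //; first by move: Hp; rewrite cat_path => /andP [].
  by move: Hu; rewrite -cat_cons cat_uniq => /and3P [].
case=> p' [Hp' [i [Hi HA]]].
rewrite (upath_uniq T Hp' HP1) in Hi HA.
exists (P1 ++ P2); split; first by split.
exists i; split; first by rewrite size_cat (leq_trans Hi) // leq_addr.
rewrite HA -cat_cons !nth_cat /=.
have -> : (i < (size P1).+1)%N by apply: ltnW.
by rewrite ltnS Hi.
Qed.

Unset Implicit Arguments.
Theorem lemma1 (V : finType) (adj : rel V) (O : {set V})
  (R : realType) (d : measure_display) (Omega : measurableType d)
  (P : probability Omega R) (tau : edge adj -> Omega -> R) (s : V) :
  is_tree adj ->
  (O != finset.set0) -> (O != [set: V])%SET ->
  (forall A, measurable_fun setT (tau A)) ->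
  (forall A w, 0 <= tau A w) ->
  (forall A (x : R), P (tau A @^-1` [set x]) = 0%E) ->
  mutually_independent P tau ->
  {ae P, forall w, forall r, is_class adj O r -> s \in r ->
     feasible tau O s r w}.
Proof.
move=> T _ _ _ tau0 _ _.
apply: aeW => w r [u uO ->] sr o.
rewrite inE => /andP [oO /existsP [x /andP [xr aox]]].
move=> o1 o2 _ _ [p [[[Hp Hl Hu] Hall] Ho1]].
set rr := [set v | obs_equiv adj O u v]%SET in sr xr Hall *.
have rE v : v \in rr = [&& u \notin O, v \notin O & [disjoint pathV adj u v & O]].
  by rewrite inE.
move: (sr) (xr); rewrite !rE => /and3P [_ sO Ds] /and3P [_ xO Dx].
have hS z : z \in pathV adj s x -> z \notin O.
  case/(@PVtri _ _ T s u x z) => [/(PVsym T) Hz|Hz].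
  - by rewrite (disjointFr Ds Hz).
  - by rewrite (disjointFr Dx Hz).
have [q Hq] := ex_upath T s x.
have qr v : v \in s :: q -> v \in rr.
  move=> Hv; have Hv' := inPV Hq Hv.
  rewrite rE uO hS //=.
  apply/pred0P => z /=; apply/negbTE; apply/andP => [[Hz zO]].
  case: (@PVtri _ _ T u s v z Hz) => [Hz'|Hz'].
  - by rewrite (disjointFr Ds Hz') in zO.
  - by move: (hS z (PVpre T Hv' Hz')); rewrite zO.
have pr v : v \in o :: p -> v \notin rr.
  move=> Hv; move/allP: Hall => /(_ v Hv); rewrite inE => Dv.
  by rewrite (disjointFr Dv (PVlast T o v)).
case: (Hq) => Hqp Hql Hqu.
have HP : upath adj s o2 (q ++ o :: p).
  split.
  - rewrite cat_path Hqp Hql /= Hp andbT.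
    by case: T => [[Hs _] _]; rewrite Hs.
  - by rewrite last_cat Hql.
  - rewrite -cat_cons cat_uniq Hqu Hu andbT.
    apply/hasPn => v /pr vr; apply/negP => /qr; by rewrite (negbTE vr).
have Hin : o1 \in s :: q ++ o :: p by rewrite -cat_cons mem_cat Ho1 orbT.
rewrite /inf_time [X in X <= _]big_mkcond [X in _ <= X]big_mkcond /=.
apply: ler_sum => A _.
case: (asboolP (onpathE adj s o1 (val A))) => h1;
  case: (asboolP (onpathE adj s o2 (val A))) => h2 //.
- by exfalso; apply: h2; exact: (onpath_mono T HP Hin h1).
Qed.
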